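(* Let $n\ge1$ and let $\tau$ be real with $\tau<\frac{1}{n-1}$ (no upper restriction when $n=1$). Then every $\omega\in\Omega_n(\tau)$ is non-resonant, i.e. $\langle k,\omega\rangle\notin\mathbb{Z}$ for all $k\in\mathbb{Z}^n\setminus\{0\}$. Here $\Omega_n(\tau)$ is the set of $\omega\in\mathbb{R}^n$ for which there exists $C>0$ such that $\|T\omega\|_{\mathbb{Z}}\ge C\,T^{-(1+\tau)/n}$ for every integer $T\ge1$.
   Context: For $\omega\in\mathbb{R}^n$, $|\omega|=\max_i|\omega_i|$ and $\|\omega\|_{\mathbb{Z}}=\min_{k\in\mathbb{Z}^n}|\omega-k|$. *)

(* Defs.v *)
From HB Require Import structures.
From mathcomp Require Import all_boot all_order all_algebra.
From mathcomp Require Import all_classical all_reals all_analysis.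
Set Implicit Arguments. Unset Strict Implicit. Unset Printing Implicit Defensive.
Import Order.TTheory GRing.Theory Num.Theory.
Local Open Scope ring_scope.

Definition supnorm (R : realType) (n : nat) (v : 'I_n -> R) : R :=
  \big[Num.max/0]_(i < n) `|v i|.

(* ||v||_Z >= c, i.e. min_{k in Z^n} |v - k| >= c (the min is attained) *)
Definition normZ_ge (R : realType) (n : nat) (v : 'I_n -> R) (c : R) : Prop :=
  forall k : 'I_n -> int, c <= supnorm (fun i => v i - (k i)%:~R).

Definition Omega (R : realType) (n : nat) (tau : R) (w : 'I_n -> R) : Prop :=
  exists C : R, 0 < C /\
    forall T : nat, (1 <= T)%N ->
      normZ_ge (fun i => T%:R * w i)
               (C * (T%:R `^ (- (1 + tau) / n%:R))).

Definition nonresonant (R : realType) (n : nat) (w : 'I_n -> R) : Prop :=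
  forall k : 'I_n -> int, (exists i, k i != 0) ->
    ~ (exists m : int, \sum_(i < n) (k i)%:~R * w i = m%:~R).

(* Main.v *)
Require Import Defs.
From mathcomp Require Import all_boot all_order all_algebra.
From mathcomp Require Import all_classical all_reals all_analysis.
From mathcomp Require Import ring lra.
Import Order.TTheory GRing.Theory Num.Theory.
Local Open Scope ring_scope.
Section S.
Variable R : realType.

Lemma floor_close (y1 y2 : R) : Num.floor y1 = Num.floor y2 -> `|y1 - y2| < 1.
Proof.
move=> e.
have := floor_itv y1; have := floor_itv y2; rewrite e !intrD.
move=> /andP[a b] /andP[c d].
rewrite ltr_norml; apply/andP; split; lra.
Qed.

Definition box (Q' : nat) (y : R) : 'I_Q'.+1 :=
  inord `|Num.floor (Q'.+1%:R * (y - (Num.floor y)%:~R))|%N.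

Lemma box_close Q' (y1 y2 : R) : box Q' y1 = box Q' y2 ->
  `|(y1 - (Num.floor y1)%:~R) - (y2 - (Num.floor y2)%:~R)| < Q'.+1%:R^-1.
Proof.
move=> e.
have key : forall y : R, let z := Q'.+1%:R * (y - (Num.floor y)%:~R) in
   0 <= Num.floor z /\ (`|Num.floor z| < Q'.+1)%N.
  move=> y z; have := floor_itv y; rewrite intrD => /andP[a b].
  have z0 : 0 <= z by rewrite /z mulr_ge0 // subr_ge0.
  have zQ : z < Q'.+1%:R.
    rewrite /z -[X in _ < X]mulr1 ltr_pM2l ?ltr0Sn //; lra.
  split; first by rewrite floor_ge0.
  rewrite -ltz_nat gez0_abs ?floor_ge0 //.
  by rewrite floor_lt_int.
have [a1 b1] := key y1; have [a2 b2] := key y2.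
move: e; rewrite /box => /(congr1 (@nat_of_ord _)).
rewrite !inordK // => /(congr1 Posz); rewrite !gez0_abs // => /floor_close.
set u := (y1 - _); set v := (y2 - _).
rewrite -mulrBr normrM ger0_norm ?ler0n // => h.
by rewrite -[X in _ < X]mul1r ltr_pdivlMr ?ltr0Sn // mulrC.
Qed.

Lemma dirichlet (d Q : nat) (x : 'I_d -> R) : (0 < Q)%N ->
  exists q : nat, [/\ (0 < q)%N, (q <= Q ^ d)%N &
     forall i, exists p : int, `|q%:R * x i - p%:~R| <= Q%:R^-1].
Proof.
case: Q => [//|Q'] _.
pose g (t : 'I_(Q'.+1 ^ d).+1) : {ffun 'I_d -> 'I_Q'.+1} :=
  [ffun i => box Q' (t%:R * x i)].
have [[t1 [t2 [ne eq]]]|H] :=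
  pselect (exists t1 t2, t1 != t2 /\ g t1 = g t2); last first.
  have inj : injective g.
    move=> a b e; apply/eqP; apply/negPn/negP => ne; apply: H; by exists a, b.
  have := @leq_card _ _ g inj; rewrite card_ffun !card_ord ltnn //.
wlog lt12 : t1 t2 ne eq / (t1 < t2)%N.
  move=> W; case: (ltngtP t1 t2) => h; first exact: W h.
    by apply: (W t2 t1) => //; rewrite eq_sym.
  by move: ne; rewrite -val_eqE /= h eqxx.
exists (t2 - t1)%N; split.
- by rewrite subn_gt0.
- by rewrite leq_subLR; have := ltn_ord t2; rewrite ltnS => h; apply: leq_trans h (leq_addl _ _).
- move=> i; exists (Num.floor (t2%:R * x i) - Num.floor (t1%:R * x i)).
  have := congr1 (fun f : {ffun 'I_d -> 'I_Q'.+1} => f i) eq; rewrite /g !ffunE => /box_close h.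
  apply: ltW; rewrite -normrN.
  rewrite natrB; last exact: ltnW.
  rewrite intrB.
  move: h; rewrite -normrN; set A := (Num.floor _)%:~R; set B := (Num.floor _)%:~R.
  set a := t2%:R * x i; set b := t1%:R * x i.
  have -> : (t2%:R - t1%:R) * x i = a - b by rewrite /a /b mulrBl.
  move=> h; rewrite opprK.
  suff -> : a - b - (B - A) = - (b - A - (a - B)) by rewrite normrN.
  ring.
Qed.
End S.
Section A.
Variable R : realType.

Lemma asym (C K b : R) (s d : nat) : 0 < C -> 0 <= K -> (0 < s)%N -> 0 <= b ->
  d%:R * b < 1 ->
  exists Q : nat, (0 < Q)%N /\ K / Q%:R < C * ((s * Q ^ d)%N)%:R `^ (-b).
Proof.
move=> C0 K0 s0 b0 db1.
set e := 1 - d%:R * b.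
have e0 : 0 < e by rewrite /e subr_gt0.
have [m hm] : exists m : nat, 1 <= m%:R * e.
  exists (Num.bound e^-1); rewrite -ler_pdivrMr // div1r; apply: ltW.
  by apply: archi_boundP; rewrite invr_ge0 ltW.
set Z := s%:R `^ b.
have Z0 : 0 < Z by rewrite powR_gt0 // ltr0n.
set L := K * Z / C.
have L0 : 0 <= L by rewrite /L divr_ge0 ?mulr_ge0 // ltW.
set N := (Num.bound L).+1.
have NL : L < N%:R.
  apply: lt_le_trans (archi_boundP L0) _; by rewrite ler_nat.
have N1 : 1 <= N%:R :> R by rewrite ler1n.
exists (N ^ m)%N; split; first by rewrite expn_gt0.
set X : R := (N ^ m)%N%:R.
have X0 : 0 < X by rewrite ltr0n expn_gt0.
have XeN : N%:R <= X `^ e.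
  rewrite /X natrX -powR_mulrn ?ler0n // -powRrM.
  rewrite -[X in X <= _]powRr1 ?ler0n //; exact: ler_powR.
rewrite natrM natrX powRM ?ler0n ?exprn_ge0 ?ler0n //.
rewrite -/X -powR_mulrn ?ler0n ?(ltW X0) // -powRrM.
have -> : K / X = K * (X `^ (d%:R * - b) * X `^ (- e)).
  rewrite -powRD; last by apply/implyP => _; rewrite gt_eqF.
  by rewrite /e opprB mulrN addrA addNr add0r powR_inv1 ?(ltW X0).
set Y := X `^ (d%:R * - b); set W := X `^ (- e); set S := s%:R `^ (- b).
have Y0 : 0 < Y by rewrite powR_gt0.
suff h : K * W < C * S.
  by rewrite [K * _]mulrCA [C * _]mulrA [C * S * Y]mulrC ltr_pM2l.
rewrite /W /S !powRN -/Z.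
have Xe0 : 0 < X `^ e by rewrite powR_gt0.
rewrite ltr_pdivrMr // mulrAC ltr_pdivlMr //.
have : L * C < N%:R * C by rewrite ltr_pM2r.
rewrite /L divfK ?gt_eqF // => h.
apply: lt_le_trans h _; rewrite mulrC ler_pM2l //.
Qed.
End A.
Section H.
Variable R : realType.

Lemma supnorm_le n (v : 'I_n -> R) c : 0 <= c -> (forall i, `|v i| <= c) ->
  supnorm v <= c.
Proof.
move=> c0 h; rewrite /supnorm; elim/big_ind: _ => //.
by move=> x y hx hy; rewrite ge_max hx hy.
Qed.

Lemma pow_lower (T M a b : R) : 0 <= b -> -b <= a -> 1 <= T -> T <= M ->
  M `^ (-b) <= T `^ a.
Proof.
move=> b0 ab T1 TM.
have T0 : 0 < T by apply: lt_le_trans T1; exact: ltr01.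
apply: le_trans (ler_powR T1 ab); rewrite !powRN.
rewrite lef_pV2 ?posrE ?powR_gt0 //; last exact: lt_le_trans TM.
by apply: ge0_ler_powR => //; rewrite nnegrE ltW //; exact: lt_le_trans TM.
Qed.
End H.
Theorem mainTheorem5 (R : realType) (n : nat) (tau : R) :
  (1 <= n)%N ->
  ((1 < n)%N -> tau < 1 / (n.-1)%:R) ->
  forall w : 'I_n -> R, Omega tau w -> nonresonant w.
Proof.
case: n => [//|n'] _ htau w [C [C0 HC]] k [j kj] [m hm].
have [k' [m' [s [s0 kjs hm']]]] : exists (k' : 'I_n'.+1 -> int) (m' : int) (s : nat),
    [/\ (0 < s)%N, k' j = s%:Z & \sum_(i < n'.+1) (k' i)%:~R * w i = m'%:~R].
  case: (ltgtP 0 (k j)) => h.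
  - exists k, m, `|k j|%N; split => //; last by rewrite gtz0_abs.
    by rewrite absz_gt0 gt_eqF.
  - exists (fun i => - k i), (- m), `|k j|%N; split => //.
    + by rewrite absz_gt0 lt_eqF.
    + by rewrite ltz0_abs.
    + rewrite intrN -hm -sumrN; apply: eq_bigr => i _; by rewrite intrN mulNr.
  - by move: kj; rewrite -h eqxx.
clear k kj m hm.
set a := - (1 + tau) / n'.+1%:R.
set b := Num.max 0 ((1 + tau) / n'.+1%:R).
have b0 : 0 <= b by rewrite le_max lexx.
have ab : - b <= a.
  by rewrite /a mulNr lerN2 le_max lexx orbT.
have db : n'%:R * b < 1.
  have n1 : 0 < n'.+1%:R :> R by rewrite ltr0n.
  rewrite /b; case: (leP 0 ((1 + tau) / n'.+1%:R)) => h; last first.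
    by rewrite mulr0 ltr01.

  case: n' htau w HC j k' kjs hm' a b b0 ab h n1 => [|n''] htau w HC j k' kjs hm' a b b0 ab h n1.
    by rewrite mul0r ltr01.
  have := htau isT; rewrite /= => ht.
  have nt : n''.+1%:R * tau < 1 by rewrite mulrC -ltr_pdivlMr ?ltr0n // div1r -div1r.
  rewrite mulrA ltr_pdivrMr // mul1r mulrDr mulr1 [n''.+2%:R]mulrS; lra.
set K : R := s%:R + \sum_(i < n') `|(k' (lift j i))%:~R|.
have sK : s%:R <= K by rewrite lerDl sumr_ge0.
have K0 : 0 <= K by apply: le_trans sK.
have [Q [Q0 hQ]] := @asym _ _ _ _ _ _ C0 K0 s0 b0 db.
have [q [q0 qQ hp]] := @dirichlet _ _ _ (fun i => w (lift j i)) Q0.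
have [p hp'] := choice hp.
clear hp.
set T := (q * s)%N.
have T0 : (0 < T)%N by rewrite muln_gt0 q0 s0.
pose P (i : 'I_n'.+1) : int := match unlift j i with
  | Some i' => s%:Z * p i'
  | None => q%:Z * m' - \sum_(i' < n') k' (lift j i') * p i' end.
have low := HC T T0 P.
have Qpos : 0 < Q%:R :> R by rewrite ltr0n.
have up : supnorm (fun i => T%:R * w i - (P i)%:~R) <= K / Q%:R.
  apply: supnorm_le; first by rewrite divr_ge0.
  move=> i; case: (unliftP j i) => [i'|] ->; rewrite /P.
  - rewrite liftK.
    have -> : T%:R * w (lift j i') - (s%:Z * p i')%:~R =
        s%:R * (q%:R * w (lift j i') - (p i')%:~R).
      by rewrite /T natrM intrM; ring.
    rewrite normrM ger0_norm ?ler0n //.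
    apply: le_trans (ler_wpM2l (ler0n _ _) (hp' i')) _.
    by rewrite ler_pM2r ?invr_gt0.
  - rewrite unlift_none.
    have hs : m'%:~R = s%:R * w j + \sum_(i < n') (k' (lift j i))%:~R * w (lift j i).
      by rewrite -hm' (@bigD1_ord _ _ _ _ j xpredT) //= kjs.
    set S1 := \sum_(i < n') _ in hs.
    have e1 : (T%:R * w j - (q%:Z * m' - \sum_(i' < n') k' (lift j i') * p i')%:~R) =
      \sum_(i < n') (k' (lift j i))%:~R * ((p i)%:~R - q%:R * w (lift j i)).
      rewrite intrB intrM hs rmorph_sum /T natrM.
      have -> : \sum_(i < n') (k' (lift j i))%:~R * ((p i)%:~R - q%:R * w (lift j i)) =
         \sum_(i < n') (k' (lift j i) * p i)%:~R - q%:R * S1.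
        rewrite /S1 mulr_sumr -sumrB; apply: eq_bigr => l _; rewrite intrM; ring.
      rewrite pmulrn; ring.
    rewrite e1; apply: le_trans (ler_norm_sum _ _ _) _.
    apply: (@le_trans _ _ (\sum_(i < n') `|(k' (lift j i))%:~R| * Q%:R^-1)).
      apply: ler_sum => l _; rewrite normrM; apply: ler_wpM2l => //.
      by rewrite -normrN opprB.
    rewrite -mulr_suml ler_pM2r ?invr_gt0 //.
    by rewrite /K lerDr.

have hT : C * (s * Q ^ n')%:R `^ (- b) <= C * T%:R `^ a.
  rewrite ler_pM2l //; apply: (@pow_lower R) => //.
    by rewrite ler1n.
  by rewrite ler_nat /T mulnC leq_mul2l qQ orbT.
have := lt_le_trans hQ (le_trans hT (le_trans low up)).
by rewrite ltxx.
Qed.
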